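(* For every rooted tree $T$, \[\mathcal{P}(T;x,y)=L(T;x,y):=\sum_{A\in\mathcal{A}(T)}x^{\ell(A)}y^{s(A)}.\]
   Context: For a rooted tree $T$ with root $r$, the branches $T_1,\dots,T_k$ are the subtrees obtained by deleting $r$, each rooted at the neighbour of $r$ it contains; $|T|$ is the number of vertices. The polynomial $\mathcal{P}(T;x,y)$ is defined recursively by $\mathcal{P}(T;x,y)=x$ if $T$ has a single vertex, and otherwise $\mathcal{P}(T;x,y)=\prod_{i=1}^k\mathcal{P}(T_i;x,y)+y^{|T|-1}$. An antichain in $T$ is a set of vertices no two of which lie on a common path starting at the root (i.e. no one is an ancestor of another); a maximal antichain is an antichain not properly contained in another antichain; $\mathcal{A}(T)$ is the set of maximal antichains of $T$. A leaf is a vertex with no children (so the root of a one-vertex tree is a leaf). For $A\in\mathcal{A}(T)$, $\ell(A)$ is the number of leaves in $A$, and $s(A)=\sum_{a\in A}(|T_a|-1)$, where $T_a$ is the subtree consisting of $a$ and all its descendants. *)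

(* Defs.v *)
From mathcomp Require Import all_boot all_algebra.
Set Implicit Arguments. Unset Strict Implicit. Unset Printing Implicit Defensive.
Import GRing.Theory.
Local Open Scope ring_scope.

Inductive rtree : Type := Node of seq rtree.

Definition branches (t : rtree) : seq rtree := let: Node ts := t in ts.

Fixpoint tsize (t : rtree) : nat :=
  let: Node ts := t in
  S ((fix aux (l : seq rtree) : nat :=
        match l with [::] => 0%N | t' :: l' => (tsize t' + aux l')%N end) ts).

Fixpoint Ppoly (R : comRingType) (x y : R) (t : rtree) : R :=
  let: Node ts := t in
  match ts with
  | [::] => x
  | _ => (fix aux (l : seq rtree) : R :=
            match l with [::] => 1 | t' :: l' => Ppoly x y t' * aux l' end) ts
         + y ^+ (tsize t).-1
  end.

(* Vertices are identified by their address: the sequence of child indices on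
   the path from the root (the root has address [::]). *)
Fixpoint vertices (t : rtree) : seq (seq nat) :=
  let: Node ts := t in
  [::] :: (fix aux (i : nat) (l : seq rtree) : seq (seq nat) :=
             match l with
             | [::] => [::]
             | t' :: l' => map (cons i) (vertices t') ++ aux i.+1 l'
             end) 0%N ts.

Fixpoint subtree (a : seq nat) (t : rtree) : rtree :=
  match a with
  | [::] => t
  | i :: a' => subtree a' (nth t (branches t) i)
  end.

Definition vtx (t : rtree) := 'I_(size (vertices t)).
Definition addr (t : rtree) (v : vtx t) : seq nat := nth [::] (vertices t) v.

Definition anc (t : rtree) (u v : vtx t) : bool := prefix (addr u) (addr v).

Definition antichain (t : rtree) (A : {set vtx t}) : bool :=
  [forall u in A, forall v in A, (u != v) ==> ~~ anc u v].

Definition max_antichain (t : rtree) (A : {set vtx t}) : bool :=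
  antichain A && [forall B : {set vtx t}, (A \proper B) ==> ~~ antichain B].

Definition is_leaf (t : rtree) (v : vtx t) : bool :=
  nilp (branches (subtree (addr v) t)).

Definition nleaves (t : rtree) (A : {set vtx t}) : nat := #|[set a in A | is_leaf a]|.
Definition sA (t : rtree) (A : {set vtx t}) : nat :=
  (\sum_(a in A) (tsize (subtree (addr a) t)).-1)%N.

Definition Lpoly (R : comRingType) (x y : R) (t : rtree) : R :=
  \sum_(A : {set vtx t} | max_antichain A) x ^+ nleaves A * y ^+ sA A.

(* Main.v *)
Require Import Defs.
From mathcomp Require Import all_boot all_algebra.
From Stdlib Require List.
Import Defs.
Set Implicit Arguments. Unset Strict Implicit. Unset Printing Implicit Defensive.
Import GRing.Theory.
Local Open Scope ring_scope.

Fixpoint subs (X : Type) (s : seq X) : seq (seq X) :=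
  if s is v :: s' then map (cons v) (subs s') ++ subs s' else [:: [::]].

Lemma subs_map (X Y : Type) (f : X -> Y) s : subs (map f s) = map (map f) (subs s).
Proof.
elim: s => //= v s ->; rewrite map_cat -!map_comp; congr (_ ++ _); exact: eq_map.
Qed.

Lemma sum_subs_cat (R : comRingType) (X : Type) (A B : seq X) (h : seq X -> R) :
 \sum_(S <- subs (A ++ B)) h S = \sum_(SA <- subs A) \sum_(SB <- subs B) h (SA ++ SB).
Proof.
elim: A h => [|v A IH] h /=; first by rewrite big_seq1.
by rewrite !big_cat !big_map !IH.
Qed.

Lemma sum_subs_nil (R : comRingType) (X : eqType) (V : seq X) (h : seq X -> R) :
  \sum_(S <- subs V | S == [::]) h S = h [::].
Proof.
elim: V => [|v V IH] /=; first by rewrite big_cons big_nil eqxx addr0.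
rewrite big_cat big_map /= IH big1 ?add0r //.
Qed.

Lemma mem_subs (X : eqType) (V S : seq X) : S \in subs V -> subseq S V.
Proof.
elim: V S => [|v V IH] S /=; first by rewrite inE => /eqP->.
rewrite mem_cat => /orP[/mapP[S' /IH H ->]|/IH H].
  by rewrite /= eqxx.
exact: subseq_trans H (subseq_cons V v).
Qed.

Lemma mem_subs_sub (X : eqType) (V S : seq X) : S \in subs V -> {subset S <= V}.
Proof. by move=> /mem_subs H x; apply: mem_subseq. Qed.

Definition cmpa (a b : seq nat) := prefix a b || prefix b a.
Definition macL (V S : seq (seq nat)) :=
  all (fun a => all (fun b => (a == b) || ~~ prefix a b) S) S && all (fun v => has (cmpa v) S) V.

Lemma macL_cat A B SA SB : {subset SA <= A} -> {subset SB <= B} ->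
 (forall a b, a \in A -> b \in B -> ~~ cmpa a b) ->
 macL (A ++ B) (SA ++ SB) = macL A SA && macL B SB.
Proof.
move=> sA sB sep.
have cross1 a b : a \in SA -> b \in SB -> (a == b) || ~~ prefix a b.
  move=> /sA aA /sB bB; move: (sep a b aA bB); rewrite /cmpa negb_or.
  by case/andP=> -> _; rewrite orbT.
have cross2 a b : a \in SB -> b \in SA -> (a == b) || ~~ prefix a b.
  move=> /sB aB /sA bA; move: (sep b a bA aB); rewrite /cmpa negb_or.
  by case/andP=> _ ->; rewrite orbT.
have hA v : v \in A -> has (cmpa v) SB = false.
  by move=> vA; apply/negbTE/hasPn => b /sB bB; exact: sep v b vA bB.
have hB v : v \in B -> has (cmpa v) SA = false.
  by move=> vB; apply/negbTE/hasPn => a /sA aA; rewrite /cmpa orbC; exact: sep a v aA vB.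
rewrite /macL all_cat.
have -> : all (fun a => all (fun b => (a == b) || ~~ prefix a b) (SA ++ SB)) SA =
          all (fun a => all (fun b => (a == b) || ~~ prefix a b) SA) SA.
  apply: eq_in_all => a aSA; rewrite all_cat.
  have -> : all (fun b => (a == b) || ~~ prefix a b) SB by apply/allP => b bSB; exact: cross1.
  by rewrite andbT.
have -> : all (fun a => all (fun b => (a == b) || ~~ prefix a b) (SA ++ SB)) SB =
          all (fun a => all (fun b => (a == b) || ~~ prefix a b) SB) SB.
  apply: eq_in_all => a aSB; rewrite all_cat.
  have -> : all (fun b => (a == b) || ~~ prefix a b) SA by apply/allP => b bSA; exact: cross2.
  by [].
have -> : all (fun v => has (cmpa v) (SA ++ SB)) (A ++ B) =
   all (fun v => has (cmpa v) SA) A && all (fun v => has (cmpa v) SB) B.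
  rewrite all_cat; congr andb; apply: eq_in_all => v vA; rewrite has_cat.
    by rewrite hA ?orbF.
  by rewrite hB.
by rewrite andbACA.
Qed.

Lemma macL_map i V S : macL (map (cons i) V) (map (cons i) S) = macL V S.
Proof.
rewrite /macL !all_map; congr andb.
  apply: eq_all => a /=; rewrite all_map; apply: eq_all => b /=.
  by rewrite eqseq_cons eqxx.
apply: eq_all => a /=; rewrite has_map; apply: eq_has => b /=.
by rewrite /cmpa !prefix_cons eqxx.
Qed.

Lemma macL_root V S : {subset S <= V} -> [::] \notin V ->
 macL ([::] :: V) ([::] :: S) = (S == [::]).
Proof.
move=> sS nV; case: S sS => [|b S] sS.
  rewrite /macL /= /cmpa; apply/allP => v _. 
  by rewrite prefix0s orbT.
apply/negbTE/negP => /andP[/allP H _].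
have := H [::] (mem_head _ _); move=> /allP /(_ b).
rewrite !inE eqxx orbT => /(_ isT); rewrite prefix0s orbF => /eqP eb.
by move: (sS b (mem_head _ _)); rewrite -eb (negbTE nV).
Qed.

Lemma macL_nil V : macL V [::] = (V == [::]).
Proof. by case: V. Qed.

Lemma macL_noroot V S : {subset S <= V} -> [::] \notin V ->
  macL ([::] :: V) S = macL V S && (S != [::]).
Proof.
move=> sS nV; rewrite /macL /=.
have -> : has (cmpa [::]) S = (S != [::]) by case: S {sS} => //= b S; rewrite /cmpa prefix0s.
by rewrite [X in _ && X]andbC andbA.
Qed.

Section F.
Variable R : comRingType.
Definition F (V : seq (seq nat)) (g : seq nat -> R) :=
  \sum_(S <- subs V | macL V S) \prod_(a <- S) g a.

Lemma F_map i V g : F (map (cons i) V) g = F V (fun a => g (i :: a)).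
Proof.
rewrite /F subs_map big_map.
by apply: eq_big => [S|S _]; [exact: macL_map | rewrite big_map].
Qed.

Lemma F_cat A B g : (forall a b, a \in A -> b \in B -> ~~ cmpa a b) ->
  F (A ++ B) g = F A g * F B g.
Proof.
move=> sep; rewrite /F big_mkcond sum_subs_cat [RHS]big_distrl [RHS]big_mkcond /=.
apply: eq_big_seq => SA HA; case: (boolP (macL A SA)) => hA.
  rewrite big_distrr [RHS]big_mkcond; apply: eq_big_seq => SB HB /=.
  rewrite macL_cat ?hA /=; [|exact: mem_subs_sub HA|exact: mem_subs_sub HB|exact: sep].
  by rewrite big_cat; case: (macL B SB); rewrite ?mulr0.
apply: big1_seq => SB /andP[_ HB].
rewrite macL_cat ?(negbTE hA) //; [exact: mem_subs_sub HA|exact: mem_subs_sub HB].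
Qed.

Lemma F_root (V : seq (seq nat)) (g : seq nat -> R) : [::] \notin V -> V != [::] -> F ([::] :: V) g = g [::] + F V g.
Proof.
move=> nV V0; rewrite /F /= big_cat big_map /=; congr (_ + _).
  rewrite big_seq_cond (eq_bigl (fun S => (S \in subs V) && (S == [::]))).
    by rewrite -big_seq_cond sum_subs_nil big_seq1.
  move=> S /=; case HS: (S \in subs V) => //=.
  by rewrite macL_root //; exact: mem_subs_sub HS.
rewrite big_seq_cond [RHS]big_seq_cond; apply: eq_bigl => S /=.
case HS: (S \in subs V) => //=; rewrite macL_noroot //; last exact: mem_subs_sub HS.
by case: S {HS} => [|? ?]; rewrite ?andbF ?andbT // macL_nil (negbTE V0).
Qed.

Lemma F_leaf (g : seq nat -> R) : F [:: [::]] g = g [::].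
Proof. by rewrite /F /= !big_cons big_nil /= /macL /= /cmpa /= big_nil mulr1 addr0. Qed.
End F.

Definition rtree_ind2 (P : rtree -> Prop)
  (H : forall ts, (forall t, List.In t ts -> P t) -> P (Node ts)) : forall t, P t :=
  fix IH (t : rtree) : P t :=
    match t with
    | Node ts => H ts ((fix aux (l : seq rtree) : forall u, List.In u l -> P u :=
        match l with
        | [::] => fun u (F : List.In u [::]) => False_ind (P u) F
        | t0 :: l' => fun u (Hin : List.In u (t0 :: l')) =>
            match Hin with
            | or_introl e => eq_ind t0 P (IH t0) u e
            | or_intror h => aux l' u h
            end
        end) ts)
    end.

Lemma In_nth (ts : seq rtree) k d : (k < size ts)%N -> List.In (nth d ts k) ts.
Proof. by elim: ts k => //= t ts IH [|k] //= H; [left|right; apply: IH]. Qed.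

Fixpoint vaux (i : nat) (l : seq rtree) : seq (seq nat) :=
  match l with
  | [::] => [::]
  | t' :: l' => map (cons i) (vertices t') ++ vaux i.+1 l'
  end.

Lemma vertices_node ts : vertices (Node ts) = [::] :: vaux 0 ts.
Proof. by []. Qed.

Lemma vertices_root t : [::] \in vertices t.
Proof. by case: t => ts; rewrite vertices_node mem_head. Qed.

Lemma vaux_head i ts a : a \in vaux i ts -> (a != [::]) && (i <= head 0%N a)%N.
Proof.
elim: ts i => //= t ts IH i; rewrite mem_cat => /orP[/mapP[b _ ->]|/IH]; first by rewrite /= leqnn.
by case/andP=> -> /= /ltnW.
Qed.

Lemma vaux_nil i ts : [::] \notin vaux i ts.
Proof. by apply/negP => /vaux_head. Qed.

Section Trees.
Variable R : comRingType.
Variables x y : R.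

Lemma F_vaux i ts d (g : seq nat -> R) :
  F (vaux i ts) g = \prod_(k < size ts) F (vertices (nth d ts k)) (fun a => g ((i + k)%N :: a)).
Proof.
elim: ts i g => [|t ts IH] i g /=; first by rewrite big_ord0 /F /= big_cons big_nil /= big_nil addr0.
rewrite F_cat; last first.
  move=> a b /mapP[a' _ ->] /vaux_head; case: b => //= j b /ltn_eqF ij.
  by apply/negP => /orP[/andP[/eqP e _]|/andP[/eqP e _]]; move: ij; rewrite e eqxx.
rewrite (@F_map R i (vertices t) g) IH big_ord_recl /= addn0; congr (_ * _).
by apply: eq_bigr => k _; rewrite addSnnS.
Qed.

Lemma auxP ts : (fix aux (l : seq rtree) : R :=
            match l with [::] => 1 | t' :: l' => Ppoly x y t' * aux l' end) ts
   = \prod_(t <- ts) Ppoly x y t.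
Proof. by elim: ts => [|t ts IH]; rewrite ?big_nil // big_cons -IH. Qed.

Lemma Ppoly_cons t ts : Ppoly x y (Node (t :: ts)) =
   \prod_(u <- t :: ts) Ppoly x y u + y ^+ (tsize (Node (t :: ts))).-1.
Proof. by rewrite -auxP. Qed.

Definition gT (T : rtree) (a : seq nat) : R :=
  (if nilp (branches (subtree a T)) then x else 1) * y ^+ (tsize (subtree a T)).-1.

Lemma Ppoly_F T : Ppoly x y T = F (vertices T) (gT T).
Proof.
elim/rtree_ind2: T => -[|t ts] IH.
  by rewrite F_leaf /gT /= mulr1.
rewrite Ppoly_cons vertices_node F_root ?vaux_nil //; last first.
  by apply/eqP => /(congr1 (fun s => [:: 0%N] \in s)); rewrite /= mem_cat map_f ?vertices_root.
rewrite addrC; congr (_ + _); first by rewrite /gT /= mul1r.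
rewrite (F_vaux _ _ (Node (t :: ts))) (big_nth (Node (t :: ts))) big_mkord.
apply: eq_bigr => k _; rewrite IH //; exact: In_nth.
Qed.

Lemma uniq_vertices T : uniq (vertices T).
Proof.
elim/rtree_ind2: T => ts IH; rewrite vertices_node /= vaux_nil /=.
elim: ts 0%N IH => //= t ts IHts i IH.
rewrite cat_uniq map_inj_uniq ?IH /=; last by move=> a b [].
  rewrite IHts ?andbT; last by move=> u Hu; apply: IH; right.
  apply/hasPn => a /vaux_head /andP[_]; apply: contraTN => /mapP[b _ ->] /=.
  by rewrite ltnn.
by left.
Qed.
End Trees.

Section Sets.
Variable R : comRingType.

Lemma sum_sets_gen (T : finType) (h : {set T} -> R) (e : seq T) : uniq e ->
  \sum_(A : {set T} | A \subset [set v in e]) h A = \sum_(S <- subs e) h [set v in S].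
Proof.
elim: e h => [|v e IH] h /=.
  move=> _; have E0 : [set v in [::]] = set0 :> {set T} by apply/setP => z; rewrite !inE.
  rewrite big_cons big_nil addr0 E0 (eq_bigl (pred1 set0)) ?big_pred1_eq //.
  by move=> A /=; rewrite subset0.
case/andP=> ve ue; rewrite big_cat big_map (bigID (fun A : {set T} => v \in A) (fun A : {set T} => A \subset [set v0 in v :: e]) h) /=; congr (_ + _).
  rewrite (reindex_onto (fun B => v |: B) (fun A => A :\ v)) /=; last first.
    by move=> A /andP[_ vA]; rewrite setD1K.
  transitivity (\sum_(S <- subs e) h (v |: [set v0 in S])); last first.
    apply: eq_bigr => S _; rewrite (_ : v |: [set v0 in S] = [set v0 in v :: S]) //.
    by apply/setP => z; rewrite !inE.
  rewrite -(IH (fun B => h (v |: B))) //; apply: eq_bigl => B.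
  rewrite setU11 andbT.
  apply/idP/idP.
    case/andP=> /subsetP sB /eqP <-; apply/subsetP => z; rewrite !inE => /andP[zv zB].
    move: (sB z); rewrite !inE => H; move: (H zB) => /orP[/eqP zv2|//]; by rewrite zv2 eqxx in zv.
  move=> /subsetP sB; apply/andP; split.
    apply/subsetP => z; rewrite !inE => /orP[->//|/sB]; rewrite inE => ->; by rewrite orbT.
  apply/eqP/setP => z; rewrite !inE; case: eqP => [->|_] /=; last by [].
  by apply/esym/negbTE/negP => /sB; rewrite inE (negbTE ve).
rewrite -IH //; apply: eq_bigl => A; apply/idP/idP.
  case/andP=> /subsetP sA vA; apply/subsetP => z zA; move: (sA z zA); rewrite !inE.
  by case/orP => // /eqP zv; move: vA; rewrite -zv zA.
move=> /subsetP sA; apply/andP; split.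
  by apply/subsetP => z /sA; rewrite !inE => ->; rewrite orbT.
by apply/negP => /sA; rewrite inE (negbTE ve).
Qed.

Lemma sum_sets (T : finType) (h : {set T} -> R) :
  \sum_(A : {set T}) h A = \sum_(S <- subs (enum T)) h [set v in S].
Proof.
rewrite -sum_sets_gen ?enum_uniq //; apply: eq_bigl => A.
by apply/esym/subsetP => z _; rewrite inE mem_enum.
Qed.
End Sets.

Section Final.
Variable R : comRingType.
Variables x y : R.
Variable T : rtree.

Lemma addr_eq (u v : vtx T) : (addr u == addr v) = (u == v).
Proof. by rewrite /addr nth_uniq ?uniq_vertices. Qed.

Lemma addr_mem (u : vtx T) : addr u \in vertices T.
Proof. exact: mem_nth. Qed.

Lemma addr_onto a : a \in vertices T -> exists u : vtx T, addr u = a.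
Proof.
move=> aV; have H : (index a (vertices T) < size (vertices T))%N by rewrite index_mem.
by exists (Ordinal H); rewrite /addr /= nth_index.
Qed.

Lemma map_addr_enum : map (@addr T) (enum (vtx T)) = vertices T.
Proof.
rewrite (_ : map (@addr T) _ = map (nth [::] (vertices T)) (map val (enum (vtx T)))).
  by rewrite val_enum_ord map_nth_iota0 // take_size.
by rewrite -map_comp.
Qed.

Lemma weightE (S : seq (vtx T)) : uniq S ->
  x ^+ nleaves [set v in S] * y ^+ sA [set v in S] = \prod_(a <- map (@addr T) S) gT x y T a.
Proof.
move=> uS.
have -> : nleaves [set v in S] = count (@is_leaf T) S.
  rewrite /nleaves (_ : [set a in [set v in S] | is_leaf a] = [set a in filter (@is_leaf T) S]).
    by rewrite cardsE (card_uniqP (filter_uniq _ uS)) size_filter.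
  by apply/setP => a; rewrite !inE mem_filter andbC.
have -> : sA [set v in S] = (\sum_(a <- S) (tsize (subtree (addr a) T)).-1)%N.
  by rewrite /sA big_uniq //; apply: eq_bigl => a; rewrite inE.
rewrite big_map; elim: S {uS} => [|v S IH]; first by rewrite !big_nil !expr0 mulr1.
rewrite /= big_cons big_cons !exprD -IH mulrACA; congr (_ * _).
by rewrite /gT /is_leaf; case: (nilp _); rewrite ?expr1 ?expr0.
Qed.

Lemma antiE (S : seq (vtx T)) :
  antichain [set v in S] =
  all (fun a => all (fun b => (a == b) || ~~ prefix a b) (map (@addr T) S)) (map (@addr T) S).
Proof.
rewrite all_map; apply/forall_inP/allP => /= H u.
  move=> uS; rewrite all_map; apply/allP => v vS /=.
  have := H u; rewrite inE => /(_ uS) /forall_inP /(_ v); rewrite inE => /(_ vS).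
  by rewrite addr_eq /anc; case: (u == v).
rewrite inE => uS; apply/forall_inP => v; rewrite inE => vS.
move: (H u uS); rewrite all_map => /allP /(_ v vS) /=.
by rewrite addr_eq /anc; case: (u == v).
Qed.

Lemma macE (S : seq (vtx T)) :
  max_antichain [set v in S] = macL (vertices T) (map (@addr T) S).
Proof.
rewrite /max_antichain /macL -antiE.
case Ha: (antichain [set v in S]) => //=.
apply/forallP/allP => /= H.
  move=> a /addr_onto [w <-]; case wS: (w \in S).
    by apply/hasP; exists (addr w); [exact: map_f | rewrite /cmpa prefix_refl].
  apply/negPn/negP => Hn.
  have := H (w |: [set v in S]).
  rewrite (_ : [set v in S] \proper w |: [set v in S]) /=; last first.
    apply/properP; split; first exact: subsetU1.
    by exists w; rewrite ?setU11 // inE wS.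
  apply/negP/negPn/forall_inP => u; rewrite in_setU1 => uB.
  apply/forall_inP => v; rewrite in_setU1 => vB.
  apply/implyP => uv; move/forall_inP: Ha => Ha.
  case/orP: uB => [/eqP uw|uA]; case/orP: vB => [/eqP vw|vA].
  - by rewrite uw vw eqxx in uv.
  - apply/negP => anc_uv; move/hasPn: Hn => Hn.
    rewrite inE in vA; move: (Hn (addr v) (map_f _ vA)).
    by rewrite /cmpa -uw; move: anc_uv; rewrite /anc => ->.
  - apply/negP => anc_uv; move/hasPn: Hn => Hn.
    rewrite inE in uA; move: (Hn (addr u) (map_f _ uA)).
    by rewrite /cmpa -vw; move: anc_uv; rewrite /anc => ->; rewrite orbT.
  - by move/forall_inP: (Ha u uA) => /(_ v vA); rewrite uv.
move=> B; apply/implyP => /properP [sAB [w wB wA]].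
have := H (addr w) (addr_mem w) => /hasP [b /mapP [u uS ->] cwu].
have uB : u \in B by apply: (subsetP sAB); rewrite inE.
have uw : u != w by apply: contraNneq wA => <-; rewrite inE.
apply/negP => /forall_inP Hb.
case/orP: cwu => Hp.
  by move: (Hb w wB) => /forall_inP /(_ u uB); rewrite eq_sym uw /= /anc Hp.
by move: (Hb u uB) => /forall_inP /(_ w wB); rewrite uw /= /anc Hp.
Qed.

Lemma Lpoly_F : Lpoly x y T = F (vertices T) (gT x y T).
Proof.
have E : subs (vertices T) = map (map (@addr T)) (subs (enum (vtx T))).
  by rewrite -subs_map map_addr_enum.
rewrite /Lpoly big_mkcond sum_sets /F [RHS]big_mkcond E big_map.
apply: eq_big_seq => S HS /=.
have uS : uniq S by apply: subseq_uniq (mem_subs HS) (enum_uniq _).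
by rewrite macE weightE.
Qed.
End Final.

Theorem theorem2p9 (R : comRingType) (x y : R) (T : rtree) :
  Ppoly x y T = Lpoly x y T.
Proof. by rewrite Lpoly_F Ppoly_F. Qed.
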